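(* Assume the Setup (for a single $n$) and the Spectral notation, and let $\epsilon,\delta>0$ be arbitrary. Then \[|U_{\epsilon,\delta}|\le \frac{m\,k(k+1)}{d^2\epsilon\delta}.\]
   Context: Setup. $k\ge 1$ is an integer and $d$ a positive integer. $G=(V,U,E)$ is a finite simple bipartite graph with parts $V$, $|V|=n$, and $U$, $|U|=m$, which is $C_4$-free (any two distinct vertices have at most one common neighbour) and $(d,k+1)$-bi-regular (every $v\in V$ has degree $d$ and every $u\in U$ has degree $k+1$). $B$ is a signed adjacency matrix of $G$: the real $V\times U$ matrix with $B_{v,u}\in\{1,-1\}$ if $vu\in E$ and $B_{v,u}=0$ otherwise. Spectral notation. $L^-=\frac1d B^TB$ (a $U\times U$ positive semidefinite matrix); $\lambda_1,\dots,\lambda_{\operatorname{rank}B}$ are its positive eigenvalues (with multiplicity) and $\psi_1,\dots,\psi_{\operatorname{rank}B}\in\mathbb R^U$ a corresponding orthonormal family of eigenvectors. A vertex $u\in U$ is $(\epsilon,\delta)$-structured if $\sum_{i:(\lambda_i-1)^2>\epsilon}\psi_i(u)^2>\delta$, and $U_{\epsilon,\delta}$ is the set of such vertices. *)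

(* Defs.v *)
From HB Require Import structures.
From mathcomp Require Import all_boot all_order all_algebra.
From mathcomp Require Import reals.
Set Implicit Arguments. Unset Strict Implicit. Unset Printing Implicit Defensive.
Import Order.TTheory GRing.Theory Num.Theory.
Local Open Scope ring_scope.

(* A bipartite graph G = (V, U, E) with V = 'I_n, U = 'I_m, given by its
   edge relation E v u ("vu is an edge").  Bipartite graphs given this way
   are automatically simple (no loops, no multi-edges). *)

Definition C4_free (n m : nat) (E : 'I_n -> 'I_m -> bool) : Prop :=
  (forall v v' : 'I_n, v != v' -> (#|[set u | E v u && E v' u]| <= 1)%N) /\
  (forall u u' : 'I_m, u != u' -> (#|[set v | E v u && E v u']| <= 1)%N).

Definition biregular (n m : nat) (E : 'I_n -> 'I_m -> bool) (d k : nat) : Prop :=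
  (forall v : 'I_n, #|[set u | E v u]| = d) /\
  (forall u : 'I_m, #|[set v | E v u]| = k.+1).

Definition signed_adj (R : numDomainType) (n m : nat)
  (E : 'I_n -> 'I_m -> bool) (B : 'M[R]_(n, m)) : Prop :=
  forall v u, if E v u then (B v u = 1 \/ B v u = -1) else B v u = 0.

Definition Lminus (R : fieldType) (n m d : nat) (B : 'M[R]_(n, m)) : 'M[R]_m :=
  (d%:R)^-1 *: (B^T *m B).

Definition spectral_data (R : realFieldType) (n m d : nat) (B : 'M[R]_(n, m))
  (lam : 'I_(\rank B) -> R) (psi : 'I_(\rank B) -> 'cV[R]_m) : Prop :=
  (forall i, 0 < lam i) /\
  (forall i, Lminus d B *m psi i = lam i *: psi i) /\
  (forall i j, (psi i)^T *m psi j = ((i == j)%:R)%:M).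

Definition structured_set (R : realFieldType) (m r : nat)
  (lam : 'I_r -> R) (psi : 'I_r -> 'cV[R]_m) (eps delta : R) : {set 'I_m} :=
  [set u | delta < \sum_(i < r | eps < (lam i - 1) ^+ 2) (psi i u ord0) ^+ 2].

(* Main.v *)
Require Import Defs.
From HB Require Import structures.
From mathcomp Require Import all_boot all_order all_algebra.
From mathcomp Require Import reals lra ring.
Import Order.TTheory GRing.Theory Num.Theory.
Local Open Scope ring_scope.

Lemma bessel (R : realFieldType) (n r : nat) (a : 'I_n -> R) (w : 'I_r -> 'I_n -> R) :
  (forall i j, i != j -> \sum_v w i v * w j v = 0) ->
  (forall i, 0 < \sum_v w i v ^+ 2) ->
  \sum_i (\sum_v a v * w i v) ^+ 2 / (\sum_v w i v ^+ 2) <= \sum_v a v ^+ 2.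
Proof.
move=> Horth Hpos.
pose c i := \sum_v w i v ^+ 2.
pose p i := \sum_v a v * w i v.
pose t i := p i / c i.
pose b v := a v - \sum_j t j * w j v.
have ex : forall (f : 'I_n -> R), \sum_v (\sum_j t j * w j v) * f v
      = \sum_j t j * \sum_v w j v * f v.
  move=> f; under eq_bigr do rewrite mulr_suml.
  rewrite exchange_big /=; apply: eq_bigr => j _.
  by rewrite mulr_sumr; apply: eq_bigr => v _; rewrite mulrA.
have key : forall i, \sum_v b v * w i v = 0.
  move=> i; rewrite /b.
  under eq_bigr do rewrite mulrBl.
  rewrite sumrB ex (bigD1 i) //=.
  have -> : \sum_(j < r | j != i) t j * \sum_v w j v * w i v = 0.
    by rewrite big1 // => j Hj; rewrite Horth ?mulr0.
  have -> : \sum_v w i v * w i v = c i by apply: eq_bigr => v _; rewrite expr2.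
  rewrite addr0 /t divfK ?subrr //; exact: lt0r_neq0 (Hpos i).
have key2 : forall i, \sum_v w i v * b v = 0.
  by move=> i; rewrite -[RHS](key i); apply: eq_bigr => v _; rewrite mulrC.
have H1 : \sum_v b v ^+ 2 = \sum_v a v ^+ 2 - \sum_i t i * p i.
  transitivity (\sum_v b v * a v - \sum_v (\sum_j t j * w j v) * b v).
    rewrite -sumrB; apply: eq_bigr => v _.
    by rewrite expr2 {2}/b mulrBr [b v * (\sum_j _)]mulrC.
  rewrite ex [X in _ - X]big1 ?subr0; last by move=> j _; rewrite key2 mulr0.
  rewrite /b.
  under eq_bigr do rewrite mulrBl.
  rewrite sumrB ex; congr (_ - _); apply: eq_bigr => j _; congr (_ * _); apply: eq_bigr => v _; exact: mulrC.
have H0 : 0 <= \sum_v b v ^+ 2 by apply: sumr_ge0 => v _; exact: sqr_ge0.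
rewrite H1 subr_ge0 in H0; apply: le_trans H0; rewrite le_eqVlt; apply/orP; left; apply/eqP.
apply: eq_bigr => i _; rewrite /t /p /c expr2; by rewrite mulrAC.
Qed.
Lemma dotE (R : realFieldType) p (x y : 'cV[R]_p) :
  (x^T *m y) ord0 ord0 = \sum_v x v ord0 * y v ord0.
Proof. by rewrite !mxE; apply: eq_bigr => v _; rewrite mxE. Qed.

Lemma sum_indic (R : realFieldType) (T : finType) (P : pred T) :
  \sum_(x : T) ((P x)%:R : R) = (#|[set x | P x]|)%:R.
Proof.
rewrite -sum1_card natr_sum [RHS]big_mkcond /=; apply: eq_bigr => x _.
by rewrite inE; case: (P x).
Qed.

Lemma sum_sub (R : realFieldType) (T : finType) (P : pred T) (f : T -> R) :
  (forall x, 0 <= f x) -> \sum_(x | P x) f x <= \sum_x f x.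
Proof.
move=> H; rewrite big_mkcond /=; apply: ler_sum => x _.
by case: (P x).
Qed.
Lemma count_bound (R : realFieldType) (n m k d : nat) (E : 'I_n -> 'I_m -> bool)
  (B : 'M[R]_(n, m)) :
  (forall v v' : 'I_n, v != v' -> (#|[set u | E v u && E v' u]| <= 1)%N) ->
  biregular E d k -> signed_adj E B ->
  \sum_v \sum_v' (B *m B^T - (d%:R)%:M) v v' ^+ 2 <= (m * k * k.+1)%:R.
Proof.
move=> C4 [Hdv Hdu] HB.
pose e v u : R := (E v u)%:R.
have Bsq : forall v u, B v u ^+ 2 = e v u.
  move=> v u; move: (HB v u); rewrite /e; case: (E v u) => [[]->|->].
  - by rewrite expr1n.
  - by rewrite sqrrN expr1n.
  - by rewrite expr0n.
have Bnorm : forall v u, `|B v u| = e v u.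
  move=> v u; move: (HB v u); rewrite /e; case: (E v u) => [[]->|->].
  - by rewrite normr1.
  - by rewrite normrN normr1.
  - by rewrite normr0.
have e2 : forall v u, e v u * e v u = e v u by move=> v u; rewrite /e; case: (E v u); rewrite ?mulr0 ?mulr1.
have sdv : forall v, \sum_u e v u = d%:R.
  by move=> v; rewrite sum_indic -(Hdv v).
have sdu : forall u, \sum_v e v u = k.+1%:R.
  by move=> u; rewrite (sum_indic _ _ (fun v => E v u)) -(Hdu u).
have entry : forall v v', (B *m B^T - (d%:R)%:M) v v' =
    \sum_u B v u * B v' u - d%:R * (v == v')%:R.
  move=> v v'; rewrite !mxE; congr (_ - _).
    by apply: eq_bigr => u _; rewrite mxE.
  by rewrite mulr_natr.
have row : forall v v', (B *m B^T - (d%:R)%:M) v v' ^+ 2 <=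
    (v' != v)%:R * \sum_u e v u * e v' u.
  move=> v v'; rewrite entry; have [<-|ne] := eqVneq v' v.
    rewrite mulr1 mul0r.
    have -> : \sum_u B v' u * B v' u = d%:R.
      by rewrite -(sdv v'); apply: eq_bigr => u _; rewrite -Bsq expr2.
    by rewrite subrr expr0n.
  rewrite mulr0 subr0 mul1r.
  set x := \sum_u _.
  set c := \sum_u _.
  have hx : `|x| <= c.
    apply: le_trans (ler_norm_sum _ _ _) _; apply: ler_sum => u _.
    by rewrite normrM !Bnorm.
  have hc : c <= 1.
    have -> : c = (#|[set u | E v u && E v' u]|)%:R.
      rewrite -sum_indic; apply: eq_bigr => u _; rewrite /e.
      by case: (E v u); case: (E v' u); rewrite ?mulr0 ?mulr1 ?mul0r.
    by rewrite -[1]/(1%:R) ler_nat; apply: C4; rewrite eq_sym.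
  have hx0 : 0 <= `|x| by [].
  have -> : x ^+ 2 = `|x| ^+ 2 by rewrite -normrX ger0_norm ?sqr_ge0.
  nra.
apply: le_trans (ler_sum _ (fun v _ => ler_sum _ (fun v' _ => row v v'))) _.
have inner : forall v u, \sum_v' (v' != v)%:R * e v' u = k.+1%:R - e v u.
  move=> v u; rewrite -(sdu u) [LHS](bigD1 v) //= [in RHS](bigD1 v) //= eqxx mul0r add0r.
  rewrite [e v u + _]addrC addrK; apply: eq_bigr => v' ->; by rewrite mul1r.
have -> : \sum_v \sum_v' (v' != v)%:R * \sum_u e v u * e v' u
    = \sum_u \sum_v e v u * \sum_v' (v' != v)%:R * e v' u.
  rewrite [RHS]exchange_big /=; apply: eq_bigr => v _.
  under eq_bigr do rewrite mulr_sumr.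
  rewrite exchange_big /=; apply: eq_bigr => u _.
  rewrite mulr_sumr; apply: eq_bigr => v' _; by rewrite mulrCA.
under eq_bigr do under eq_bigr do rewrite inner -natr1 mulrBr e2 mulrDr mulr1 addrK.
under eq_bigr do rewrite -mulr_suml sdu.
rewrite sumr_const card_ord -[X in X <= _]mulr_natr -!natrM.
by rewrite ler_nat [(m * k)%N]mulnC -mulnA mulnC.
Qed.

Theorem claim2p4 (R : realType) (k d n m : nat) (E : 'I_n -> 'I_m -> bool)
  (B : 'M[R]_(n, m)) (lam : 'I_(\rank B) -> R) (psi : 'I_(\rank B) -> 'cV[R]_m)
  (eps delta : R) :
  (1 <= k)%N -> (0 < d)%N ->
  C4_free E -> biregular E d k -> signed_adj E B ->
  @spectral_data R n m d B lam psi ->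
  0 < eps -> 0 < delta ->
  (#|structured_set lam psi eps delta|)%:R
    <= (m * k * k.+1)%:R / ((d ^ 2)%:R * eps * delta).
Proof.
move=> Hk Hd [C4a _] Hbr HB [Hlam [Heig Horth]] He Hdel.
have dn0 : (d%:R : R) != 0 by rewrite pnatr_eq0 -lt0n.
have dgt0 : (0 : R) < d%:R by rewrite ltr0n.
have BtB : B^T *m B = d%:R *: Lminus d B.
  by rewrite /Lminus scalerA mulfV ?scale1r.
pose w i : 'cV[R]_n := B *m psi i.
pose A : 'M[R]_n := B *m B^T - (d%:R)%:M.
have Aw : forall i, A *m w i = (d%:R * (lam i - 1)) *: w i.
  move=> i; rewrite /A /w mulmxBl mul_scalar_mx mulmxA -[B *m B^T *m B]mulmxA BtB.
  by rewrite -scalemxAr -scalemxAl -mulmxA Heig -scalemxAr scalerA mulrBr mulr1 scalerBl.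
have gram : forall i j, (w i)^T *m w j = (d%:R * lam j * (i == j)%:R)%:M.
  move=> i j; rewrite /w trmx_mul -!mulmxA [B^T *m (B *m _)]mulmxA BtB -scalemxAl.
  by rewrite -scalemxAr Heig -!scalemxAr Horth scalerA scale_scalar_mx.
have wnorm : forall i, \sum_v w i v ord0 ^+ 2 = d%:R * lam i.
  move=> i; have := congr1 (fun M : 'M[R]_1 => M ord0 ord0) (gram i i).
  rewrite /= dotE eqxx mulr1 mxE eqxx mulr1n => <-.
  by apply: eq_bigr => v _; rewrite expr2.
have worth : forall i j, i != j -> \sum_v w i v ord0 * w j v ord0 = 0.
  move=> i j ne; have := congr1 (fun M : 'M[R]_1 => M ord0 ord0) (gram i j).
  by rewrite /= dotE (negbTE ne) mulr0 mxE mul0rn.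
have wpos : forall i, 0 < \sum_v w i v ord0 ^+ 2.
  by move=> i; rewrite wnorm mulr_gt0.
have Aent : forall v i, \sum_v' A v v' * w i v' ord0 = d%:R * (lam i - 1) * w i v ord0.
  move=> v i; have := congr1 (fun M : 'cV[R]_n => M v ord0) (Aw i).
  by rewrite /= !mxE => <-.
have StepC : d%:R ^+ 2 * \sum_i (lam i - 1) ^+ 2 <= (m * k * k.+1)%:R.
  apply: le_trans _ (count_bound _ _ _ _ _ _ _ C4a Hbr HB).
  apply: le_trans _ (ler_sum _ (fun v _ => bessel _ _ _ (fun v' => A v v') (fun i v' => w i v' ord0) worth wpos)).
  rewrite le_eqVlt; apply/orP; left; apply/eqP.
  under [RHS]eq_bigr do under eq_bigr do rewrite Aent wnorm.
  rewrite exchange_big /= mulr_sumr; apply: eq_bigr => i _.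
  under eq_bigr do rewrite exprMn mulrAC.
  rewrite -mulr_sumr wnorm divfK ?exprMn //.
  by apply: lt0r_neq0; rewrite mulr_gt0.
set S := structured_set lam psi eps delta.
pose I i := eps < (lam i - 1) ^+ 2.
pose c := \sum_(i | I i) (1 : R).
have psinorm : forall i, \sum_u psi i u ord0 ^+ 2 = 1.
  move=> i; have := congr1 (fun M : 'M[R]_1 => M ord0 ord0) (Horth i i).
  rewrite /= dotE eqxx mxE eqxx mulr1n => H.
  apply: etrans (etrans H _); last by [].
  by apply: eq_bigr => u _; rewrite expr2.
have StepA : #|S|%:R * delta <= c.
  rewrite mulr_natl -sumr_const.
  apply: (@le_trans _ _ (\sum_(u in S) \sum_(i | I i) psi i u ord0 ^+ 2)).
    by apply: ler_sum => u; rewrite inE => Hu; exact: ltW.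
  apply: le_trans (sum_sub _ _ _ _ _) _.
    by move=> u; apply: sumr_ge0 => i _; exact: sqr_ge0.
  rewrite exchange_big /=; apply: ler_sum => i _; by rewrite psinorm.
have StepB : c * eps <= \sum_i (lam i - 1) ^+ 2.
  rewrite /c mulr_suml.
  apply: le_trans (sum_sub _ _ I _ _).
    by apply: ler_sum => i Hi; rewrite mul1r ltW.
  by move=> i; exact: sqr_ge0.
have Dpos : (0 : R) < (d ^ 2)%:R by rewrite natrX exprn_gt0.
rewrite ler_pdivlMr; last by rewrite !mulr_gt0.
rewrite natrX in Dpos *.
apply: le_trans StepC.
set x := (#|S|)%:R.
have -> : x * (d%:R ^+ 2 * eps * delta) = d%:R ^+ 2 * ((x * delta) * eps) by ring.
rewrite ler_wpM2l ?exprn_ge0 ?ler0n //.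
apply: le_trans StepB.
by rewrite ler_wpM2r // ltW.
Qed.
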